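(* Let $0<\rho<1$ and let $\mathcal{S}=(S_1,\dots,S_m)$ be a collection of $m$ subsets of $[n]$ with $\mathrm{opt}(\mathcal{S})\le k$. Suppose $U_{\mathrm{smpl}}\subseteq[n]$ is obtained by picking each element of $[n]$ independently with probability $p\ge 16\,k\log m/(\rho n)$. Then, with probability $1-1/m^2$, every collection of $k$ sets in $\mathcal{S}$ that covers $U_{\mathrm{smpl}}$ entirely also covers at least $(1-\rho)n$ elements of $[n]$.
   Context: $\mathrm{opt}(\mathcal{S})$ denotes the minimum number of sets of $\mathcal{S}$ whose union is $[n]$. A collection covers a set $U$ if $U$ is contained in the union of its members. *)

(* Defs.v *)
From HB Require Import structures.
From mathcomp Require Import all_boot all_order all_algebra.
From mathcomp Require Import reals exp.
Set Implicit Arguments. Unset Strict Implicit. Unset Printing Implicit Defensive.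
Import Order.TTheory GRing.Theory Num.Theory.
Local Open Scope ring_scope.

Definition union_of (n m : nat) (S : 'I_m -> {set 'I_n}) (I : {set 'I_m})
  : {set 'I_n} := \bigcup_(i in I) S i.

Definition covers (n m : nat) (S : 'I_m -> {set 'I_n}) (I : {set 'I_m})
  (U : {set 'I_n}) : bool := U \subset union_of S I.

Definition opt_le (n m : nat) (S : 'I_m -> {set 'I_n}) (k : nat) : Prop :=
  exists I : {set 'I_m}, (#|I| <= k)%N /\ union_of S I = [set: 'I_n].

(* Probability of the event E when U is a random subset of [n] obtained by
   including each element independently with probability p. *)
Definition sample_prob (R : realType) (n : nat) (p : R)
  (E : pred {set 'I_n}) : R :=
  \sum_(U : {set 'I_n} | E U) p ^+ #|U| * (1 - p) ^+ (n - #|U|).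

(* Main.v *)
Require Import Defs.
From HB Require Import structures.
From mathcomp Require Import all_boot all_order all_algebra.
From mathcomp Require Import reals exp sequences zify lra.
Import Order.TTheory GRing.Theory Num.Theory.
Local Open Scope ring_scope.

Section Helpers.
Variable R : realType.
Variable n : nat.
Variable p : R.

Definition wt (U : {set 'I_n}) : R := p ^+ #|U| * (1 - p) ^+ (n - #|U|).

Lemma wt_prod U : wt U = \prod_(i : 'I_n) (if i \in U then p else 1 - p).
Proof.
rewrite /wt [RHS](bigID (mem U)) /=.
rewrite [X in _ = X * _](eq_bigr (fun _ => p)); last by move=> i ->.
rewrite [X in _ = _ * X](eq_bigr (fun _ => 1 - p)); last by move=> i /negbTE ->.
rewrite !prodr_const; congr (_ * _ ^+ _).
have h := cardsC U; rewrite card_ord in h.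
have e : #|[pred i | i \notin U]| = #|~: U| by apply: eq_card => i; rewrite !inE.
rewrite e; apply: (@addnI #|U|); rewrite h subnKC //; by move: (leq_addr #|~: U| #|U|); rewrite h.
Qed.

Lemma sum_sub (A : {set 'I_n}) :
  \sum_(U : {set 'I_n} | U \subset A) wt U =
  \prod_(i : 'I_n) (if i \in A then p + (1 - p) else 1 - p).
Proof.
pose F (i : 'I_n) (b : bool) := if b then (if i \in A then p else 0) else 1 - p.
transitivity (\prod_(i : 'I_n) \sum_(b : bool) F i b); last first.
  by apply: eq_bigr => i _; rewrite big_bool /F; case: (i \in A) => //; exact: add0r.
rewrite bigA_distr_bigA /=.
rewrite (reindex (fun U : {set 'I_n} => [ffun i => i \in U])) /=; last first.
  apply: onW_bij; exists (fun f : {ffun 'I_n -> bool} => [set i | f i]).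
    by move=> U; apply/setP => i; rewrite inE ffunE.
  by move=> f; apply/ffunP => i; rewrite ffunE inE.
rewrite [RHS](bigID (fun U : {set 'I_n} => U \subset A)) /=.

rewrite [X in _ = _ + X]big1 ?addr0; last first.
  move=> U /subsetPn [i iU iA]; rewrite (bigD1 i) //= ffunE /F iU (negbTE iA).
  by rewrite mul0r.
apply: eq_bigr => U /subsetP UA; rewrite wt_prod; apply: eq_bigr => i _.
rewrite ffunE /F; case iU: (i \in U) => //.
by rewrite UA.
Qed.

Lemma sum_sub_eq (A : {set 'I_n}) :
  \sum_(U : {set 'I_n} | U \subset A) wt U = (1 - p) ^+ (n - #|A|).
Proof.
rewrite sum_sub (bigID (mem A)) /=.
rewrite (eq_bigr (fun _ => 1)); last by move=> i ->; rewrite addrC subrK.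
rewrite [X in _ * X](eq_bigr (fun _ => 1 - p)); last by move=> i /negbTE ->.
rewrite !prodr_const expr1n mul1r; congr (_ ^+ _).
have h := cardsC A; rewrite card_ord in h.
have e : #|[pred i | i \notin A]| = #|~: A| by apply: eq_card => i; rewrite !inE.
rewrite e; apply: (@addnI #|A|); rewrite h subnKC //; by move: (leq_addr #|~: A| #|A|); rewrite h.
Qed.

End Helpers.

Lemma card_small (m k : nat) :
  (#|[set I : {set 'I_m} | (#|I| <= k)%N]| <= (m.+1) ^ k)%N.
Proof.
pose g (f : {ffun 'I_k -> option 'I_m}) := [set x | Some x \in codom f].
apply: (@leq_trans #|g @: [set: {ffun 'I_k -> option 'I_m}]|).
  apply: subset_leq_card; apply/subsetP => I; rewrite inE => cI.
  apply/imsetP.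
  exists [ffun i : 'I_k => nth None (map Some (enum I)) i]; first by rewrite inE.
  apply/setP => x; rewrite inE; apply/idP/codomP.
    move=> xI.
    have hi : (index x (enum I) < k)%N.
      apply: leq_trans cI; rewrite cardE index_mem mem_enum //.
    exists (Ordinal hi); rewrite ffunE /= (nth_map x).
      by rewrite nth_index ?mem_enum.
    by rewrite index_mem mem_enum.
  move=> [i]; rewrite ffunE.
  case: (ltnP i (size (enum I))) => hi.
    rewrite (nth_map x) // => [[->]]; rewrite -mem_enum; exact: mem_nth.
  by rewrite nth_default // size_map.
apply: leq_trans (leq_imset_card _ _) _.
by rewrite cardsT card_ffun card_option !card_ord.
Qed.

Arguments wt {R n}.

Lemma wt_ge0 (R : realType) n (p : R) (U : {set 'I_n}) :
  0 <= p -> p <= 1 -> 0 <= wt p U.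
Proof. by move=> p0 p1; rewrite /wt mulr_ge0 // exprn_ge0 // subr_ge0. Qed.

Lemma nat_bound (m k : nat) : (1 < m)%N -> (0 < k)%N ->
  (m.+1 ^ k * m ^ 2 <= m ^ (16 * k))%N.
Proof.
move=> m1 k0.
have h1 : (m.+1 ^ k <= m ^ (2 * k))%N.
  rewrite expnM leq_exp2r // expnS expn1; nia.
have h2 : (m ^ 2 <= m ^ (2 * k))%N by apply: leq_pexp2l; lia.
apply: leq_trans (leq_mul h1 h2) _.
rewrite -expnD; apply: leq_pexp2l; lia.
Qed.

Theorem lemma3p9 (R : realType) (rho p : R) (n m k : nat)
  (S : 'I_m -> {set 'I_n}) :
  0 < rho -> rho < 1 ->
  opt_le S k ->
  0 <= p -> p <= 1 ->
  16%:R * k%:R * ln (m%:R : R) / (rho * n%:R) <= p ->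
  1 - 1 / (m%:R ^+ 2) <=
  sample_prob p (fun U : {set 'I_n} =>
    [forall I : {set 'I_m},
      ((#|I| <= k)%N && covers S I U) ==>
      ((1 - rho) * n%:R <= (#|union_of S I|)%:R)]).
Proof.
move=> rho0 rho1 [I0 [cI0 uI0]] p0 p1 hp.
set E := (fun U : {set 'I_n} => _).
have -> : sample_prob p E = \sum_(U | E U) wt p U by [].
have tot : \sum_(U : {set 'I_n}) wt p U = 1.
  have := @sum_sub_eq R n p [set: 'I_n].
  rewrite cardsT card_ord subnn expr0 => <-.
  by apply: eq_bigl => U; rewrite subsetT.
have hsplit : \sum_(U | E U) wt p U = 1 - \sum_(U | ~~ E U) wt p U.
  by rewrite -tot [in RHS](bigID E) /= addrK.
rewrite hsplit lerD2l lerN2.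
have [n0|npos] := posnP n.
  have hn : n%:R = 0 :> R by rewrite n0.
  rewrite big1; last first.
    move=> U /negP []; apply/forallP => I; apply/implyP => _.
    by rewrite hn mulr0 ler0n.
  by rewrite mul1r invr_ge0 exprn_ge0 // ler0n.
have [i0 i0I0] : exists i0, i0 \in I0.
  have : Ordinal npos \in union_of S I0 by rewrite uI0 inE.
  by rewrite /union_of => /bigcupP [i0 iI _]; exists i0.
have k0 : (0 < k)%N.
  apply: leq_trans cI0; rewrite card_gt0; apply/set0Pn; by exists i0.
have m0 : (0 < m)%N by case: (i0) => [j hj]; apply: leq_ltn_trans hj.
have [m1|m2] := leqP m 1.
  have hm : m%:R = 1 :> R by have -> : m = 1%N by lia.
  rewrite hm expr1n divr1 -tot [X in _ <= X](bigID E) /= lerDr.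
  by apply: sumr_ge0 => U _; apply: wt_ge0.
pose Bad := [set I : {set 'I_m} | (#|I| <= k)%N &&
   ~~ ((1 - rho) * n%:R <= (#|union_of S I|)%:R)].
pose Mr : R := (m%:R) ^+ (16 * k).
have step1 : \sum_(U | ~~ E U) wt p U <=
   \sum_(I in Bad) \sum_(U : {set 'I_n} | U \subset union_of S I) wt p U.
  rewrite big_mkcond /=.
  rewrite (eq_bigr (fun I : {set 'I_m} => \sum_(U : {set 'I_n}) (if U \subset union_of S I then wt p U else 0)));
    last by move=> I _; rewrite big_mkcond.
  rewrite exchange_big /=.
  apply: ler_sum => U _; case: ifP => hE; last first.
    by apply: sumr_ge0 => I _; case: ifP => // _; apply: wt_ge0.
  move: hE; rewrite /E negb_forall => /existsP [I].
  rewrite negb_imply => /andP [/andP [cI cov] hI].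
  have IB : I \in Bad by rewrite inE cI hI.
  rewrite /covers in cov.
  rewrite (bigD1 I IB) /= cov lerDl; apply: sumr_ge0 => J _.
  by case: ifP => // _; exact: wt_ge0.
have step2 : forall I, I \in Bad ->
   \sum_(U : {set 'I_n} | U \subset union_of S I) wt p U <= Mr^-1.
  move=> I; rewrite inE => /andP[_ hI].
  rewrite sum_sub_eq.
  have un := max_card (mem (union_of S I)); rewrite card_ord in un.
  set u := #|union_of S I| in hI un *.
  have hu : u%:R < (1 - rho) * n%:R by rewrite ltNge.
  have n0 : 0 < n%:R :> R by rewrite ltr0n.
  have hc : rho * n%:R <= (n - u)%:R :> R.
    rewrite natrB // mulrBl mul1r in hu *; lra.
  have rn0 : 0 < rho * n%:R by rewrite mulr_gt0.
  rewrite ler_pdivrMr // in hp.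
  have key : 16%:R * k%:R * ln (m%:R : R) <= p * (n - u)%:R.
    apply: (le_trans hp); exact: ler_wpM2l.
  apply: (@le_trans _ _ (expR (- p) ^+ (n - u))).
    apply: lerXn2r; rewrite ?nnegrE ?subr_ge0 ?expR_ge0 //.
    by have := expR_ge1Dx (- p).
  rewrite -expRM_natl.
  apply: (@le_trans _ _ (expR (- ((16 * k)%:R * ln (m%:R : R))))).
    by rewrite ler_expR natrM mulrN lerN2 [in X in _ <= X]mulrC.
  rewrite expRN expRM_natl lnK; first by []. rewrite posrE ltr0n; lia.
have step3 : \sum_(I in Bad) Mr^-1 <= 1 / (m%:R ^+ 2).
  have cB : (#|Bad| <= (m.+1)^k)%N.
    apply: leq_trans (card_small m k); apply: subset_leq_card.
    by apply/subsetP => I; rewrite !inE => /andP[].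
  have Mr0 : 0 < Mr by rewrite /Mr exprn_gt0 // ltr0n.
  rewrite sumr_const -mulr_natl.
  apply: (@le_trans _ _ (((m.+1)^k)%:R * Mr^-1)).
    by rewrite -[_ *+ #|Bad|]mulr_natl ler_pM2r ?invr_gt0 // ler_nat.
  rewrite ler_pdivrMr // mul1r mulrC ler_pdivlMr ?exprn_gt0 ?ltr0n //; last by rewrite mulr1 ltr0n; lia.
  by rewrite mulr1 /Mr -!natrX -natrM ler_nat nat_bound.
apply: (le_trans step1); apply: le_trans step3.
exact: ler_sum.
Qed.
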